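(* Let $\mathcal{T}$ be a periodic Cartesian mesh of the two-dimensional torus with $N_x\times N_y=N$ rectangular cells $c_{i,j}$, where cell $c_{i,j}$ has midpoint $(m^x_{i,j},m^y_{i,j})$ and side lengths $L^x_{i,j}$, $L^y_{i,j}$. Let $V$ be the space of vector fields $\mathbf{u}$ such that on each cell $c_{i,j}$, $$\mathbf{u}|_{c_{i,j}}\in\operatorname{span}\left\{\begin{pmatrix}1\\0\end{pmatrix},\ \begin{pmatrix}0\\1\end{pmatrix},\ \begin{pmatrix}\frac{2}{L^x_{i,j}}(m^x_{i,j}-x)\\ \frac{2}{L^y_{i,j}}(y-m^y_{i,j})\end{pmatrix}\right\}.$$ Then the subspace of $V$ of fields satisfying $[\![\mathbf{u}\cdot\mathbf{n}_f]\!]=0$ for every face $f$ of the mesh has dimension $N+1$.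
   Context: Each face $f$ carries a fixed unit normal $\mathbf{n}_f$; the cell into which $\mathbf{n}_f$ points is the right cell $R$, the other the left cell $L$, and $[\![\mathbf{u}\cdot\mathbf{n}_f]\!]=\mathbf{u}_R\cdot\mathbf{n}_f-\mathbf{u}_L\cdot\mathbf{n}_f$ (traces from each side along $f$). *)

(* Defs.v *)
From HB Require Import structures.
From mathcomp Require Import all_boot all_order all_algebra.
Set Implicit Arguments. Unset Strict Implicit. Unset Printing Implicit Defensive.
Import Order.TTheory GRing.Theory Num.Theory.
Local Open Scope ring_scope.

(* Periodic Cartesian mesh of the 2-torus: Nx columns of widths hx i and
   Ny rows of heights hy j; cell c_{i,j} = [xnode i, xnode i + hx i] x
   [ynode j, ynode j + hy j], so L^x_{i,j} = hx i and L^y_{i,j} = hy j.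
   The torus is [0, sum hx) x [0, sum hy) with periodic identification;
   the neighbour of column i to the right is column (ordS i) = (i+1) mod Nx. *)

Definition node (R : realFieldType) (n : nat) (h : 'I_n -> R) (i : 'I_n) : R :=
  \sum_(k < n | (k < i)%N) h k.

Definition mid (R : realFieldType) (n : nat) (h : 'I_n -> R) (i : 'I_n) : R :=
  node h i + h i / 2.

(* An element of V is given by its three coefficients on each cell, w.r.t.
   the cellwise spanning set (1,0), (0,1),
   ((2/L^x)(m^x - x), (2/L^y)(y - m^y)). *)
Definition Vcoef (R : realFieldType) (Nx Ny : nat) :=
  {ffun 'I_Nx * 'I_Ny -> 'rV[R]_3}.

Definition field_on_cell (R : realFieldType) (Nx Ny : nat)
  (hx : 'I_Nx -> R) (hy : 'I_Ny -> R) (u : Vcoef R Nx Ny)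
  (i : 'I_Nx) (j : 'I_Ny) (p : R * R) : R * R :=
  let c := u (i, j) in
  (c 0 0 + c 0 2 * (2 / hx i * (mid hx i - p.1)),
   c 0 1 + c 0 2 * (2 / hy j * (p.2 - mid hy j))).

(* Vertical face between c_{i,j} (left, L) and c_{i+1,j} (right, R), with
   n_f = (1,0): it is {x_{i+1}} x [ynode j, ynode j + hy j], located at
   x = xnode i + hx i seen from L and x = xnode (i+1 mod Nx) seen from R
   (periodic identification).  Horizontal faces similarly with n_f = (0,1). *)
Definition normal_jump_free (R : realFieldType) (Nx Ny : nat)
  (hx : 'I_Nx -> R) (hy : 'I_Ny -> R) (u : Vcoef R Nx Ny) : Prop :=
  (forall (i : 'I_Nx) (j : 'I_Ny) (y : R),
      node hy j <= y <= node hy j + hy j ->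
      (field_on_cell hx hy u (ordS i) j (node hx (ordS i), y)).1
      - (field_on_cell hx hy u i j (node hx i + hx i, y)).1 = 0)
  /\
  (forall (i : 'I_Nx) (j : 'I_Ny) (x : R),
      node hx i <= x <= node hx i + hx i ->
      (field_on_cell hx hy u i (ordS j) (x, node hy (ordS j))).2
      - (field_on_cell hx hy u i j (x, node hy j + hy j)).2 = 0).

(* Main.v *)
Require Import Defs.
From HB Require Import structures.
From mathcomp Require Import all_boot all_order all_algebra.
From mathcomp Require Import ring lra zify.
Set Implicit Arguments. Unset Strict Implicit. Unset Printing Implicit Defensive.
Import Order.TTheory GRing.Theory Num.Theory.
Local Open Scope ring_scope.

Definition Fj (R : realFieldType) Nx Ny (u : Vcoef R Nx Ny) (p : 'I_Nx * 'I_Ny) : R :=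
  u (ordS p.1, p.2) 0 0 + u (ordS p.1, p.2) 0 2 - u p 0 0 + u p 0 2.
Definition Gj (R : realFieldType) Nx Ny (u : Vcoef R Nx Ny) (p : 'I_Nx * 'I_Ny) : R :=
  u (p.1, ordS p.2) 0 1 - u (p.1, ordS p.2) 0 2 - u p 0 1 - u p 0 2.

Definition jmp (R : realFieldType) Nx Ny (u : Vcoef R Nx Ny) :
  {ffun 'I_Nx * 'I_Ny -> R^o} * {ffun 'I_Nx * 'I_Ny -> R^o} :=
  ([ffun p => Fj u p], [ffun p => Gj u p]).

Lemma jmp_lin (R : realFieldType) Nx Ny : linear (@jmp R Nx Ny).
Proof.
move=> a u v; rewrite /jmp; congr (_, _); apply/ffunP=> p; rewrite !ffunE /Fj /Gj !ffunE !mxE;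
 rewrite /GRing.scale /=; ring.
Qed.

Lemma two_h (R : realFieldType) (h : R) : 0 < h -> 2 / h * (h / 2) = 1.
Proof. move=> hp; have hn : h != 0 by rewrite gt_eqF. by field; rewrite hn /= ?pnatr_eq0. Qed.

Lemma nj_iff (R : realFieldType) Nx Ny (hx : 'I_Nx -> R) (hy : 'I_Ny -> R) u :
  (forall i, 0 < hx i) -> (forall j, 0 < hy j) ->
  normal_jump_free hx hy u <-> jmp u = 0.
Proof.
move=> hxp hyp.
have eF : forall i j y, (field_on_cell hx hy u (ordS i) j (node hx (ordS i), y)).1
      - (field_on_cell hx hy u i j (node hx i + hx i, y)).1 = Fj u (i, j).
  move=> i j y; rewrite /field_on_cell /= /Fj /= /mid.
  have -> : node hx (ordS i) + hx (ordS i) / 2 - node hx (ordS i) = hx (ordS i) / 2 by ring.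
  have -> : node hx i + hx i / 2 - (node hx i + hx i) = - (hx i / 2) by field.
  rewrite mulrN !two_h //. ring.
have eG : forall i j x, (field_on_cell hx hy u i (ordS j) (x, node hy (ordS j))).2
      - (field_on_cell hx hy u i j (x, node hy j + hy j)).2 = Gj u (i, j).
  move=> i j x; rewrite /field_on_cell /= /Gj /= /mid.
  have -> : node hy (ordS j) - (node hy (ordS j) + hy (ordS j) / 2) = - (hy (ordS j) / 2) by ring.
  have -> : node hy j + hy j - (node hy j + hy j / 2) = hy j / 2 by field.
  rewrite mulrN !two_h //. ring.
split.
- case=> H1 H2; rewrite /jmp; congr (_, _); apply/ffunP=> -[i j]; rewrite !ffunE.
  + rewrite -(eF i j (node hy j)); apply: H1; rewrite lexx /= lerDl ltW //.
  + rewrite -(eG i j (node hx i)); apply: H2; rewrite lexx /= lerDl ltW //.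
- move=> H; split=> i j z _; rewrite ?eF ?eG.
  + by move: H => [] /ffunP /(_ (i, j)); rewrite !ffunE.
  + by move: H => [] _ /ffunP /(_ (i, j)); rewrite !ffunE.
Qed.

Lemma tele (R : zmodType) (I : finType) (s : I -> I) (g : I -> R) :
  injective s -> \sum_p (g (s p) - g p) = 0.
Proof. by move=> si; rewrite sumrB [X in _ - X](reindex_inj si) subrr. Qed.

Lemma sumFG (R : realFieldType) Nx Ny (u : Vcoef R Nx Ny) :
  \sum_p Fj u p + \sum_p Gj u p = 0.
Proof.
have sxi : injective (fun p : 'I_Nx * 'I_Ny => (ordS p.1, p.2)).
  by move=> [a b] [c d] E; congr (_, _); [apply: ordS_inj; exact: (f_equal fst E) | exact: (f_equal snd E)].
have syi : injective (fun p : 'I_Nx * 'I_Ny => (p.1, ordS p.2)).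
  by move=> [a b] [c d] E; congr (_, _); [exact: (f_equal fst E) | apply: ordS_inj; exact: (f_equal snd E)].
have eF : \sum_p Fj u p = \sum_p ((fun q => u q 0 0 + u q 0 2) (ordS p.1, p.2)
           - (fun q => u q 0 0 + u q 0 2) p) + \sum_p (2 * u p 0 2).
  by rewrite -big_split; apply: eq_bigr => p _; rewrite /Fj /=; ring.
have eG : \sum_p Gj u p = \sum_p ((fun q => u q 0 1 - u q 0 2) (p.1, ordS p.2)
           - (fun q => u q 0 1 - u q 0 2) p) - \sum_p (2 * u p 0 2).
  by rewrite -sumrB; apply: eq_bigr => p _; rewrite /Gj /=; ring.
rewrite eF eG (tele _ sxi) (tele _ syi); ring.
Qed.

Definition slot (R : realFieldType) nx ny (u : Vcoef R nx.+1 ny.+1)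
  (p : 'I_nx.+1 * 'I_ny.+1) : R :=
  if (p.1 < nx)%N && (p.2 < ny)%N then u p 0 2
  else if (p.2 < ny)%N then u (ord0, p.2) 0 0
  else u (p.1, ord0) 0 1.

Definition gmap (R : realFieldType) nx ny (u : Vcoef R nx.+1 ny.+1) :
  {ffun 'I_nx.+1 * 'I_ny.+1 -> R^o} * R^o :=
  ([ffun p => slot u p], u (ord0, ord_max) 0 0).

Lemma gmap_lin (R : realFieldType) nx ny : linear (@gmap R nx ny).
Proof.
move=> a u v; rewrite /gmap; congr (_, _); last by rewrite !ffunE !mxE.
apply/ffunP=> p; rewrite !ffunE /slot.
by case: ((p.1 < nx)%N && (p.2 < ny)%N); case: (p.2 < ny)%N; rewrite !ffunE !mxE.
Qed.

Lemma ord3 (k : 'I_3) : k = 0 \/ k = 1 \/ k = 2.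
Proof.
case: k => [[|[|[|k]]] hk]; [left|right;left|right;right|] => //; by apply/val_inj.
Qed.

Lemma kill (R : realFieldType) nx ny (u : Vcoef R nx.+1 ny.+1) :
  jmp u = 0 -> gmap u = 0 -> u = 0.
Proof.
move=> HJ Hg.
have HF : forall p, Fj u p = 0.
  by move=> p; move: HJ => [] /ffunP /(_ p); rewrite !ffunE.
have HG : forall p, Gj u p = 0.
  by move=> p; move: HJ => [] _ /ffunP /(_ p); rewrite !ffunE.
have Hs : forall p, slot u p = 0.
  by move=> p; move: Hg => [] /ffunP /(_ p); rewrite !ffunE.
have He : u (ord0, ord_max) 0 0 = 0 by move: Hg => [].
have rows : forall j, \sum_i u (i, j) 0 2 = 0.
  move=> j.
  have : \sum_i Fj u (i, j) = 0 by apply: big1 => i _.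
  have -> : \sum_i Fj u (i, j) = \sum_i ((fun k => u (k, j) 0 0 + u (k, j) 0 2) (ordS i)
           - (fun k => u (k, j) 0 0 + u (k, j) 0 2) i) + 2 * \sum_i u (i, j) 0 2.
    by rewrite mulr_sumr -big_split; apply: eq_bigr => i _; rewrite /Fj /=; ring.
  rewrite (tele _ (@ordS_inj _)) add0r => H; lra.
have cols : forall i, \sum_j u (i, j) 0 2 = 0.
  move=> i.
  have : \sum_j Gj u (i, j) = 0 by apply: big1 => j _.
  have -> : \sum_j Gj u (i, j) = \sum_j ((fun k => u (i, k) 0 1 - u (i, k) 0 2) (ordS j)
           - (fun k => u (i, k) 0 1 - u (i, k) 0 2) j) - 2 * \sum_j u (i, j) 0 2.
    by rewrite mulr_sumr -sumrB; apply: eq_bigr => j _; rewrite /Gj /=; ring.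
  rewrite (tele _ (@ordS_inj _)) add0r => H; lra.
have c0 : forall (i : 'I_nx.+1) (j : 'I_ny.+1), (j < ny)%N -> u (i, j) 0 2 = 0.
  move=> i j hj; case: (ltnP i nx) => hi.
    by have := Hs (i, j); rewrite /slot /= hi hj.
  have := rows j; rewrite (bigD1 i) //= big1 ?addr0 // => k hk.
  have hk' : (k < nx)%N.
    have := ltn_ord k; have := ltn_ord i; rewrite ltnS => hi'.
    have : (k : nat) != i by [].
    move=> /eqP; lia.
  by have := Hs (k, j); rewrite /slot /= hk' hj.
have c1 : forall i j, u (i, j) 0 2 = 0.
  move=> i j; case: (ltnP j ny) => hj; first exact: c0.
  have := cols i; rewrite (bigD1 j) //= big1 ?addr0 // => k hk.
  apply: c0; have := ltn_ord k; have := ltn_ord j; rewrite ltnS => hj'.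
  have : (k : nat) != j by []. move=> /eqP; lia.
have aS : forall i j, u (ordS i, j) 0 0 = u (i, j) 0 0.
  move=> i j; have := HF (i, j); rewrite /Fj /= !c1 => H; lra.
have bS : forall i j, u (i, ordS j) 0 1 = u (i, j) 0 1.
  move=> i j; have := HG (i, j); rewrite /Gj /= !c1 => H; lra.
have a0 : forall j, u (ord0, j) 0 0 = 0.
  move=> j; case: (ltnP j ny) => hj.
    by have := Hs (ord_max, j); rewrite /slot /= ltnn hj.
  suff -> : j = ord_max by [].
  apply/val_inj => /=; have := ltn_ord j; lia.
have b0 : forall i, u (i, ord0) 0 1 = 0.
  move=> i; have := Hs (i, ord_max); rewrite /slot /= ltnn andbF //.
have aa : forall j k, (k < nx.+1)%N -> u (inord k, j) 0 0 = 0.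
  move=> j; elim=> [|k IH] hk.
    by rewrite -(a0 j); congr (u (_, _) 0 0); apply/val_inj; rewrite /= inordK.
  have -> : (inord k.+1 : 'I_nx.+1) = ordS (inord k).
    apply/val_inj; rewrite /= !inordK ?modn_small //; lia.
  by rewrite aS IH //; lia.
have bb : forall i k, (k < ny.+1)%N -> u (i, inord k) 0 1 = 0.
  move=> i; elim=> [|k IH] hk.
    by rewrite -(b0 i); congr (u (_, _) 0 1); apply/val_inj; rewrite /= inordK.
  have -> : (inord k.+1 : 'I_ny.+1) = ordS (inord k).
    apply/val_inj; rewrite /= !inordK ?modn_small //; lia.
  by rewrite bS IH //; lia.
apply/ffunP=> -[i j]; apply/matrixP=> r k; rewrite !ffunE mxE (ord1 r).
case: (ord3 k) => [->|[->|->]].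
- by rewrite -(inord_val i); apply: aa.
- by rewrite -(inord_val j); apply: bb.
- exact: c1.
Qed.

Lemma dimRo (R : fieldType) : dim R^o = 1%N. Proof. by []. Qed.
Lemma dimFo (R : fieldType) (I : finType) : dim {ffun I -> R^o} = (#|I| * 1)%N. Proof. by []. Qed.
Lemma dimF3 (R : fieldType) (I : finType) : dim {ffun I -> 'rV[R]_3} = (#|I| * 3)%N.
Proof. by rewrite [LHS]/dim /= dim_matrix. Qed.

Definition hsum (R : realFieldType) (I : finType) (v : {ffun I -> R^o} * {ffun I -> R^o}) : R^o :=
  \sum_p v.1 p + \sum_p v.2 p.

Lemma hsum_lin (R : realFieldType) (I : finType) : linear (@hsum R I).
Proof.
have e : forall (w w' : {ffun I -> R^o}) (c : R), \sum_p (c *: w + w') p = c * \sum_p w p + \sum_p w' p.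
  move=> w w' c; rewrite mulr_sumr -big_split; apply: eq_bigr => p _; by rewrite !ffunE.
move=> a u v; rewrite /hsum /= !e; rewrite /GRing.scale /=; ring.
Qed.
Lemma dimPo (R : fieldType) (I : finType) :
  dim ({ffun I -> R^o} * {ffun I -> R^o})%type = (#|I| * 1 + #|I| * 1)%N.
Proof. by []. Qed.
Theorem proposition15 (R : realFieldType) (Nx Ny : nat)
  (hx : 'I_Nx -> R) (hy : 'I_Ny -> R) :
  (0 < Nx)%N -> (0 < Ny)%N ->
  (forall i, 0 < hx i) -> (forall j, 0 < hy j) ->
  exists W : {vspace Vcoef R Nx Ny},
    (forall u : Vcoef R Nx Ny, u \in W <-> normal_jump_free hx hy u) /\
    \dim W = (Nx * Ny).+1.
Proof.
case: Nx hx => [//|nx] hx; case: Ny hy => [//|ny] hy _ _ hxp hyp.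
pose jL : {linear Vcoef R nx.+1 ny.+1 -> _} :=
  HB.pack (@jmp R nx.+1 ny.+1) (GRing.isLinear.Build _ _ _ _ (@jmp R nx.+1 ny.+1) (@jmp_lin R nx.+1 ny.+1)).
pose f := linfun jL.
have fE : forall u, f u = jmp u by move=> u; rewrite lfunE.
exists (lker f); split.
  by move=> u; rewrite memv_ker fE nj_iff //; split => [/eqP|->].
pose gL : {linear Vcoef R nx.+1 ny.+1 -> _} :=
  HB.pack (@gmap R nx ny) (GRing.isLinear.Build _ _ _ _ (@gmap R nx ny) (@gmap_lin R nx ny)).
pose g := linfun gL.
have gE : forall u, g u = gmap u by move=> u; rewrite lfunE.
apply/eqP; rewrite eqn_leq; apply/andP; split.
- have := limg_ker_dim g (lker f).
  have -> : (lker f :&: lker g = 0)%VS.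
    apply/eqP; rewrite -subv0; apply/subvP => v /memv_capP [Hf Hg]; rewrite memv0.
    apply/eqP; apply: kill; apply/eqP; [rewrite -fE | rewrite -gE]; by rewrite -memv_ker.
  rewrite dimv0 add0n => <-; apply: leq_trans (dimvS (subvf _)) _; rewrite dimvf.
  change (dim {ffun ('I_nx.+1 * 'I_ny.+1) -> R^o} + dim R^o <= (nx.+1 * ny.+1).+1)%N.
  by rewrite dimFo dimRo card_prod !card_ord muln1 addn1.
pose hL : {linear ({ffun 'I_nx.+1 * 'I_ny.+1 -> R^o} * {ffun 'I_nx.+1 * 'I_ny.+1 -> R^o})%type -> R^o} :=
  HB.pack (@hsum R _) (GRing.isLinear.Build _ _ _ _ (@hsum R _) (@hsum_lin R _)).
pose h := linfun hL.
have hE : forall v, h v = hsum v by move=> v; rewrite lfunE.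
have H1 := limg_ker_dim f fullv; rewrite capfv dimvf in H1.
have H2 := limg_ker_dim h fullv; rewrite capfv dimvf in H2.
have H3 : (f @: fullv <= lker h)%VS.
  apply/subvP => w /memv_imgP [u _ ->]; rewrite memv_ker hE fE /hsum /jmp /=.
  rewrite (eq_bigr (Fj u)); last by move=> p _; rewrite ffunE.
  rewrite [X in _ + X](eq_bigr (Gj u)); last by move=> p _; rewrite ffunE.
  by rewrite sumFG.
have H4 : (0 < \dim (h @: fullv))%N.
  rewrite lt0n dimv_eq0; apply/negP => /eqP E.
  pose v0 : ({ffun 'I_nx.+1 * 'I_ny.+1 -> R^o} * {ffun 'I_nx.+1 * 'I_ny.+1 -> R^o})%type :=
    ([ffun=> 1], 0).
  have := memv_img h (memvf v0); rewrite E memv0 hE /hsum /=.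
  rewrite (eq_bigr (fun=> 1)); last by move=> p _; rewrite ffunE.
  rewrite [X in _ + X]big1 ?addr0; last by move=> p _; rewrite ffunE.
  rewrite sumr_const.
  by rewrite pnatr_eq0 card_prod !card_ord.
have H5 := dimvS H3.
move: H1 H2 H4 H5.
change (dim {ffun ('I_nx.+1 * 'I_ny.+1) -> 'rV[R]_3}) with (dim (Vcoef R nx.+1 ny.+1)).
rewrite dimF3.
change (dim ({ffun 'I_nx.+1 * 'I_ny.+1 -> R^o} * {ffun 'I_nx.+1 * 'I_ny.+1 -> R^o})%type) with
  (dim {ffun 'I_nx.+1 * 'I_ny.+1 -> R^o} + dim {ffun 'I_nx.+1 * 'I_ny.+1 -> R^o})%N.
rewrite dimPo card_prod !card_ord muln1.
move: (nx.+1 * ny.+1)%N => N.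
move: (\dim (lker f)) (\dim (limg f)) (\dim (lker h)) (\dim (limg h)) => a b c d. lia.
Qed.
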